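(* Consider SEG: $X_{t+1/2}=X_t-\gamma F_t$, $X_{t+1}=X_t-\alpha\gamma F_{t+1/2}$, where $F_t=F(X_t)+U_t(X_t)$ and $F_{t+1/2}=F(X_{t+1/2})+U_{t+1/2}(X_{t+1/2})$. Let $F:\mathbb{R}^d\to\mathbb{R}^d$ be $L$-Lipschitz, let $x^*\in X^*=\{x:F(x)=0\}$ be such that $\langle F(x),x-x^*\rangle\ge\mu\|x-x^*\|^2-\lambda$ for all $x$ (with $\lambda\ge0,\mu>0$), and assume the stochastic oracle assumptions of the context. Let $Z_t=F_{t+1/2}$. If $0<\gamma\le\frac1{\sqrt3L}$, then $$\gamma^2\,\mathbb{E}[\|Z_t\|^2\mid\mathcal{F}_t]\le2\gamma\,\mathbb{E}[\langle Z_t,X_t-x^*\rangle\mid\mathcal{F}_t]+2(\lambda\gamma+3\sigma^2\gamma^2).$$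
   Context: Stochastic oracle: noise fields are i.i.d. random fields; filtration $(\mathcal{F}_t)$ (history of the iterates) with $\mathcal{F}_{t+1/2}=\mathcal{F}_t$; $U_t(X_t)$ is $\mathcal{F}_{t+1}$- but not $\mathcal{F}_t$-measurable; $\mathbb{E}[U_t(x)\mid\mathcal{F}_t]=0$ and $\mathbb{E}[\|U_t(x)\|^2\mid\mathcal{F}_t]\le\sigma^2$ for all $x$ (and likewise for $U_{t+1/2}$). *)

(* Defs.v *)
From HB Require Import structures.
From mathcomp Require Import all_boot all_order all_algebra.
From mathcomp Require Import all_classical all_reals all_analysis.
Set Implicit Arguments. Unset Strict Implicit. Unset Printing Implicit Defensive.
Import Order.TTheory GRing.Theory Num.Theory.
Local Open Scope classical_set_scope.
Local Open Scope ring_scope.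

Definition dotp {R : realType} {d : nat} (u v : 'rV[R]_d) : R :=
  \sum_(i < d) u 0 i * v 0 i.
Definition enorm {R : realType} {d : nat} (u : 'rV[R]_d) : R :=
  Num.sqrt (dotp u u).

Section Cond.
Context {dT : measure_display} {T : measurableType dT} {R : realType}.
Variable P : probability T R.

Definition sub_sigma (G : set (set T)) : Prop :=
  sigma_algebra setT G /\ G `<=` measurable.

Definition Gmeas (G : set (set T)) (f : T -> R) : Prop :=
  forall B : set R, measurable B -> G (f @^-1` B).

Definition Gmeas_vec {d : nat} (G : set (set T)) (X : T -> 'rV[R]_d) : Prop :=
  forall i : 'I_d, Gmeas G (fun w => X w 0 i).

Definition is_cond_exp (G : set (set T)) (Z Y : T -> R) : Prop :=
  [/\ P.-integrable setT (EFin \o Z),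
      P.-integrable setT (EFin \o Y),
      Gmeas G Y &
      forall A, G A ->
        (\int[P]_(w in A) (Y w)%:E = \int[P]_(w in A) (Z w)%:E)%E].

Definition is_cond_exp_vec {d : nat} (G : set (set T))
    (Z Y : T -> 'rV[R]_d) : Prop :=
  forall i : 'I_d, is_cond_exp G (fun w => Z w 0 i) (fun w => Y w 0 i).

End Cond.

(* Main.v *)
Require Import Defs.
From HB Require Import structures.
From mathcomp Require Import all_boot all_order all_algebra.
From mathcomp Require Import all_classical all_reals all_analysis.
From mathcomp Require Import ring lra zify.
From mathcomp Require Import measurable_realfun.
Import Order.TTheory GRing.Theory Num.Theory.
Local Open Scope classical_set_scope.
Local Open Scope ring_scope.
Section Vec.
Context {R : realType} {d : nat}.
Implicit Types u v w : 'rV[R]_d.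

Lemma dotpC u v : dotp u v = dotp v u.
Proof. by apply: eq_bigr => i _; rewrite mulrC. Qed.

Lemma dotp_ge0 u : 0 <= dotp u u.
Proof. by apply: sumr_ge0 => i _; rewrite -expr2 sqr_ge0. Qed.

Lemma enorm_sq u : enorm u ^+ 2 = dotp u u.
Proof. by rewrite /enorm sqr_sqrtr // dotp_ge0. Qed.

Lemma enorm_ge0 u : 0 <= enorm u.
Proof. exact: sqrtr_ge0. Qed.

Lemma key_identity (g : R) (a f0 e u y : 'rV[R]_d) :
  g ^+ 2 * dotp (a + f0 + u) (a + f0 + u)
  - 2 * g * dotp (a + f0 + u) (y + g *: (f0 + e))
  - 2 * g ^+ 2 * dotp e e - g ^+ 2 * dotp u u
  - dotp u ((2 * g ^+ 2) *: (a + f0) - (2 * g) *: (y + g *: (f0 + e)))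
  = - (2 * g) * dotp (a + f0) y + 2 * g ^+ 2 * dotp a a
    - g ^+ 2 * dotp (f0 + e) (f0 + e) - g ^+ 2 * dotp (a + e) (a + e).
Proof.
rewrite /dotp !mulr_sumr -!sumrN -!big_split /=.
apply: eq_bigr => i _; rewrite !mxE; ring.
Qed.

End Vec.

Section Vec2.
Context {R : realType} {d : nat}.

Lemma dotp_scaleN (g : R) (v : 'rV[R]_d) :
  dotp (- (g *: v)) (- (g *: v)) = g ^+ 2 * dotp v v.
Proof. rewrite /dotp mulr_sumr; apply: eq_bigr => i _; rewrite !mxE; ring. Qed.

Lemma pointwise (F : 'rV[R]_d -> 'rV[R]_d) (L mu lam g : R) (xs x0 e u : 'rV[R]_d) :
  0 < L -> (forall x y, enorm (F x - F y) <= L * enorm (x - y)) ->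
  0 < mu ->
  (forall x, dotp (F x) (x - xs) >= mu * enorm (x - xs) ^+ 2 - lam) ->
  0 < g -> g <= 1 / (Num.sqrt 3 * L) ->
  forall xh, xh = x0 - g *: (F x0 + e) ->
  g ^+ 2 * enorm (F xh + u) ^+ 2 - 2 * g * dotp (F xh + u) (x0 - xs)
  <= 2 * g * lam + 2 * g ^+ 2 * enorm e ^+ 2 + g ^+ 2 * enorm u ^+ 2
     + dotp u ((2 * g ^+ 2) *: F xh - (2 * g) *: (x0 - xs)).
Proof.
move=> L0 Lip mu0 mono g0 gle xh hxh.
set f0 := F x0; set a := F xh - f0; set y := xh - xs.
have Fxh : F xh = a + f0 by rewrite /a subrK.
have ex : x0 - xs = y + g *: (f0 + e).
  by apply/rowP => i; rewrite /y hxh /f0 !mxE; ring.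
have H1 : - lam <= dotp (a + f0) y.
  rewrite -Fxh; apply: le_trans (mono xh).
  suff : 0 <= mu * enorm (xh - xs) ^+ 2 by move=> h; lra.
  by apply: mulr_ge0; [exact: ltW|exact: sqr_ge0].
have H2 : dotp a a <= L ^+ 2 * (g ^+ 2 * dotp (f0 + e) (f0 + e)).
  have h := Lip xh x0; rewrite -/f0 -/a in h.
  have hx : xh - x0 = - (g *: (f0 + e)).
    by apply/rowP => i; rewrite hxh /f0 !mxE; ring.
  rewrite hx in h.
  rewrite -dotp_scaleN -enorm_sq -enorm_sq -exprMn.
  by rewrite lerXn2r ?nnegrE ?enorm_ge0 ?mulr_ge0 ?enorm_ge0 // ltW.
have H3 : g ^+ 2 * L ^+ 2 <= 1 / 3.
  have s3 : 0 < Num.sqrt (3 : R) by rewrite sqrtr_gt0.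
  have h : g * (Num.sqrt 3 * L) <= 1.
    rewrite -ler_pdivlMr ?mulr_gt0 //.
  have h2 : (g * (Num.sqrt 3 * L)) ^+ 2 <= 1.
    have t0 : 0 <= g * (Num.sqrt 3 * L) by rewrite !mulr_ge0 ?ltW.
    move: h t0; set t := g * _ => h t0; nra.
  rewrite !exprMn sqr_sqrtr // in h2.
  rewrite ler_pdivlMr //; lra.
have Pa : 0 <= dotp (a + e) (a + e) := dotp_ge0 _.
have Pf : 0 <= dotp (f0 + e) (f0 + e) := dotp_ge0 _.
rewrite Fxh ex !enorm_sq.
have key := key_identity g a f0 e u y.
set Q := dotp (f0 + e) (f0 + e) in key H2 Pf *.
set A1 := dotp (a + f0) y in key H1 *.
set A2 := dotp a a in key H2 *.
have g2 : 0 < g ^+ 2 by rewrite exprn_gt0.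
have t1 : g ^+ 2 * A2 <= g ^+ 2 * (L ^+ 2 * (g ^+ 2 * Q)) by rewrite ler_pM2l.
have t2 : g ^+ 2 * L ^+ 2 * (g ^+ 2 * Q) <= 1 / 3 * (g ^+ 2 * Q).
  by apply: ler_wpM2r => //; exact: mulr_ge0 (ltW g2) Pf.
have t3 : g * (- lam) <= g * A1 by rewrite ler_pM2l.
have t4 : 0 <= g ^+ 2 * dotp (a + e) (a + e) by exact: mulr_ge0 (ltW g2) Pa.
have t5 : 0 <= g ^+ 2 * Q by exact: mulr_ge0 (ltW g2) Pf.
move: key t1 t2 t3 t4 t5.
set B1 := dotp (a + f0 + u) _; set B2 := dotp (a + f0 + u) _.
set B3 := dotp u _; set B4 := dotp e e; set B5 := dotp u u; set B6 := dotp (a + e) _.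
move=> key t1 t2 t3 t4 t5.
nra.
Qed.
End Vec2.

Lemma count_layers {R : realType} (x : R) (J : nat) : 0 <= x ->
  \sum_(j < J) ((j.+1%:R <= x)%R%:R : R) = (minn J (Num.trunc x))%:R.
Proof.
move=> x0; elim: J => [|J IH]; first by rewrite big_ord0 min0n.
rewrite big_ord_recr /= IH -truncn_gt_nat.
case: (ltnP J (Num.trunc x)) => h /=.
- by rewrite -natrD; congr (_%:R); lia.
- by rewrite -natrD; congr (_%:R); lia.
Qed.

Lemma small0 {R : realType} (r K : R) : 0 <= K ->
  (forall N : nat, `|r| <= K / N.+1%:R) -> r = 0.
Proof.
move=> K0 h; apply/eqP; apply: contraT => rn0.
have ar : 0 < `|r| by rewrite normr_gt0.
set q := K / `|r|.
have q0 : 0 <= q by rewrite divr_ge0.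
have /andP[_ hq] := truncn_itv q0.
have := h (Num.trunc q); set m := (Num.trunc q).+1%:R => hm.
have m0 : 0 < m by rewrite ltr0n.
move: hq; rewrite -/m /q ltr_pdivrMr // => hq.
move: hm; rewrite ler_pdivlMr // => hm.
have : K < K by apply: lt_le_trans hq _; rewrite mulrC.
by rewrite ltxx.
Qed.

Section Meas.
Context {dT : measure_display} {T : measurableType dT} {R : realType}.
Variable P : probability T R.
Local Notation int S f := (P.-integrable S (EFin \o f)).

Lemma Gmeas_mfun {G : set (set T)} : sub_sigma G -> forall f : T -> R, Gmeas G f -> measurable_fun setT f.
Proof. by move=> [_ GM] f Gf _ B mB; rewrite setTI; exact/GM/Gf. Qed.

Lemma int_sum {S} (mS : measurable S) (h : nat -> T -> R) J :
  (forall j, int S (h j)) ->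
  int S (fun w => \sum_(j < J) h j w) /\
  \int[P]_(w in S) (\sum_(j < J) h j w) = \sum_(j < J) \int[P]_(w in S) h j w.
Proof.
move=> hi; elim: J => [|J [iJ eJ]].
  split.
    apply: (eq_integrable _ (cst 0%E)) => //; last exact: integrable0.
    by move=> w _; rewrite /= big_ord0.
  rewrite big_ord0 (@eq_Rintegral _ _ _ _ _ (fun _ => 0)); last by move=> w _; rewrite big_ord0.
  by rewrite Rintegral_cst // mul0r.
have E : (fun w => \sum_(j < J.+1) h j w) = (fun w => \sum_(j < J) h j w + h J w).
  by apply/funext => w; rewrite big_ord_recr.
rewrite E big_ord_recr /=; split.
  apply: (eq_integrable _ ((EFin \o (fun w => \sum_(j < J) h j w)) \+ (EFin \o h J))) => //.
  exact: integrableD.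
by rewrite RintegralD // eJ.
Qed.


Lemma GI (G : set (set T)) : sub_sigma G -> forall A B, G A -> G B -> G (A `&` B).
Proof.
move=> [sG _] A B GA GB.
have := @measurableI _ (g_sigma_algebraType G) A B.
by rewrite measurable_g_measurableTypeE //; apply.
Qed.

Lemma int_mulr {S} (mS : measurable S) (u h : T -> R) K :
  int S u -> measurable_fun S h -> (forall w, S w -> `|h w| <= K) ->
  int S (fun w => u w * h w).
Proof.
move=> iu mh hK.
have bh : [bounded h x | x in S].
  exists K; split; first exact: num_real.
  by move=> M KM w Sw /=; apply: le_trans (hK _ Sw) (ltW KM).
have := integrableMl mS iu mh bh.
by apply: eq_integrable => // w _ /=; rewrite EFinM.
Qed.


Lemma int_scale {S} (mS : measurable S) (f : T -> R) k : int S f -> int S (fun w => k * f w).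
Proof.
move=> i; have := integrableZl mS k i.
by apply: eq_integrable => // w _ /=; rewrite EFinM.
Qed.

Lemma int_abs {S} (mS : measurable S) (f : T -> R) : int S f -> int S (fun w => `|f w|).
Proof.
move=> i; have := integrable_abse i.
by apply: eq_integrable => // w _ /=.
Qed.

Lemma pullout (G : set (set T)) (u v : T -> R) (S : set T) (M : R) :
  sub_sigma G -> int setT u -> (forall A, G A -> \int[P]_(w in A) u w = 0) ->
  Gmeas G v -> G S -> (forall w, S w -> `|v w| <= M) ->
  \int[P]_(w in S) (u w * v w) = 0.
Proof.
move=> sG iu u0 Gv GS vM.
have mS : measurable S := sG.2 _ GS.
have mv := Gmeas_mfun sG v Gv.
have iuS : int S u := integrableS measurableT mS (subsetT _) iu.
have mvS : measurable_fun S v := measurable_funS measurableT (subsetT _) mv.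
have iuv : int S (fun w => u w * v w) := int_mulr mS u v M iuS mvS vM.
have iau : int S (fun w => `|u w|) := int_abs mS u iuS.
apply: (@small0 _ _ (\int[P]_(w in S) `|u w|)).
  by apply: Rintegral_ge0 => w _.
move=> N.
set n : R := N.+1%:R.
have n0 : 0 < n by rewrite ltr0n.
set a := - M.
set J := (Num.trunc (2 * M * n)).+1.
set c := fun j : nat => a + j.+1%:R / n.
set E := fun j : nat => v @^-1` `[c j, +oo[.
have GE : forall j, G (E j) by move=> j; apply: Gv; exact: measurable_itv.
have mE j : measurable (E j) := sG.2 _ (GE j).
set s := fun w => a + n^-1 * \sum_(j < J) \1_(E j) w.
have sv : forall w, S w -> s w <= v w /\ v w - s w <= n^-1.
  move=> w Sw.
  have := vM w Sw; rewrite ler_norml => /andP[hv1 hv2].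
  set x := (v w - a) * n.
  have x0 : 0 <= x by apply: mulr_ge0; [rewrite /a; lra|exact: ltW].
  have ind : forall j : 'I_J, (\1_(E j) w : R) = ((j.+1%:R <= x)%R : nat)%:R.
    move=> j; rewrite /indic; congr (nat_of_bool _)%:R.
    have -> : (w \in E j) = (c j <= v w).
      apply/idP/idP => [/set_mem|h]; last apply/mem_set;
        by rewrite /E /preimage /= in_itv /= andbT.
    by rewrite /c addrC -lerBrDr ler_pdivrMr.
  have nx : n^-1 * x = v w - a by rewrite /x mulrC mulfK ?gt_eqF.
  have tJ : (Num.trunc x < J)%N.
    rewrite ltnS; apply: le_truncn.
    by rewrite /x ler_pM2r // /a; lra.
  rewrite /s (eq_bigr _ (fun j _ => ind j)) count_layers // (minn_idPr (ltnW tJ)).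
  have /andP[t1 t2] := truncn_itv x0.
  rewrite -natr1 in t2.
  have ni : 0 < n^-1 by rewrite invr_gt0.
  move: t1 t2 nx; set t := (Num.trunc x)%:R => t1 t2 nx.
  have p1 : n^-1 * t <= n^-1 * x by rewrite ler_pM2l.
  have p2 : n^-1 * x <= n^-1 * (t + 1) by rewrite ler_pM2l // ltW.
  rewrite mulrDr mulr1 in p2.
  move: p1 p2 nx; set m1 := n^-1 * t; set m2 := n^-1 * x; set ni' := n^-1.
  move=> p1 p2 nx; split; lra.
have hj : forall j : nat, int S (fun w => u w * \1_(E j) w) /\
    \int[P]_(w in S) (u w * \1_(E j) w) = 0.
  move=> j; split.
    apply: (int_mulr mS u _ 1 iuS); first exact: measurable_realfun.measurable_indic.
    by move=> w _; rewrite /indic; case: (_ \in _); rewrite ?normr0 ?normr1.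
  rewrite -(u0 (S `&` E j)); last exact: GI.
  rewrite Rintegral_mkcondr; apply: eq_Rintegral => w _.
  by rewrite /patch /indic; case: (w \in E j); rewrite ?mulr1 ?mulr0.
have Eus : (fun w => u w * s w) =
    fun w => a * u w + n^-1 * (\sum_(j < J) u w * \1_(E j) w).
  by apply/funext => w; rewrite /s mulrDr (mulrC (u w) a) mulrCA mulr_sumr.
have [isum esum] := int_sum mS (fun j w => u w * \1_(E j) w) J (fun j => (hj j).1).
have ius : int S (fun w => u w * s w).
  rewrite Eus.
  apply: (eq_integrable _ ((EFin \o (fun w => a * u w)) \+
     (EFin \o (fun w => n^-1 * \sum_(j < J) u w * \1_(E j) w)))) => //.
  by apply: integrableD => //; apply: int_scale.
have us0 : \int[P]_(w in S) (u w * s w) = 0.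
  rewrite Eus RintegralD //; try by apply: int_scale.
  rewrite !RintegralZl // esum u0 // big1 ?mulr0 ?addr0 // => j _; exact: (hj j).2.
have idiff : int S (fun w => u w * v w - u w * s w).
  have := integrableB mS iuv ius.
  by apply: eq_integrable => // w _ /=; rewrite EFinB.
rewrite -[X in `|X|]subr0 -us0 -RintegralB //.
apply: le_trans (le_normr_Rintegral mS idiff) _.
rewrite mulrC -RintegralZl //.
apply: le_Rintegral => //; first exact: int_abs.
  exact: int_scale.
move=> w Sw; have [h1 h2] := sv w Sw.
rewrite -mulrBr normrM mulrC; apply: ler_wpM2r => //.
by rewrite ger0_norm // subr_ge0.
Qed.

End Meas.

Section Vec3.
Context {R : realType} {d : nat}.
Implicit Types u v : 'rV[R]_d.

Lemma coord_le_enorm v (j : 'I_d) : `|v 0 j| <= enorm v.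
Proof.
rewrite -sqrtr_sqr /enorm ler_sqrt; last exact: dotp_ge0.
rewrite /dotp (bigD1 j) //= -expr2 lerDl.
by apply: sumr_ge0 => i _; rewrite -expr2 sqr_ge0.
Qed.

Lemma enormN v : enorm (- v) = enorm v.
Proof. by rewrite /enorm /dotp; congr Num.sqrt; apply: eq_bigr => i _; rewrite !mxE mulrNN. Qed.

Lemma enormB u v : enorm (u - v) = enorm (v - u).
Proof. by rewrite -enormN opprB. Qed.

Definition qseq (k : nat) : 'rV[R]_d :=
  match @unpickle 'rV[rat]_d k with Some r => map_mx (@ratr R) r | None => 0 end.

Lemma qseq_dense (y : 'rV[R]_d) (e : R) : 0 < e -> exists k, enorm (y - qseq k) < e.
Proof.
move=> e0.
set de := e / d.+1%:R.
have de0 : 0 < de by rewrite divr_gt0 // ltr0n.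
have : forall i : 'I_d, exists r : rat, `|y 0 i - ratr r| < de.
  move=> i; have [q] := @rat_in_itvoo R (y 0 i - de) (y 0 i + de) ltac:(lra).
  rewrite in_itv /= => /andP[h1 h2]; exists q; rewrite ltr_norml; apply/andP; split; lra.
case/fin_all_exists => f hf.
exists (pickle (\row_i f i : 'rV[rat]_d)).
rewrite /qseq pickleK.
have hc : forall i, ((y - map_mx ratr (\row_i f i)) 0 i) ^+ 2 <= de ^+ 2.
  move=> i; rewrite !mxE; have := hf i; set a := _ - _ => ha.
  rewrite -real_normK ?num_real // lerXn2r ?nnegrE ?normr_ge0 ?ltW //.
have hs : dotp (y - map_mx ratr (\row_i f i)) (y - map_mx ratr (\row_i f i)) <= d%:R * de ^+ 2.
  rewrite /dotp; apply: (@le_trans _ _ (\sum_(i < d) de ^+ 2)).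
    by apply: ler_sum => i _; rewrite -expr2; exact: hc.
  by rewrite sumr_const card_ord mulr_natl.
have hde : d%:R * de ^+ 2 < e ^+ 2.
  have hm : de * d.+1%:R = e by rewrite /de divfK // pnatr_eq0.
  have -> : e ^+ 2 = de ^+ 2 * d.+1%:R ^+ 2 by rewrite -exprMn hm.
  rewrite [d%:R * _]mulrC ltr_pM2l ?exprn_gt0 // -natrX ltr_nat; nia.
rewrite /enorm -(gtr0_norm e0) -sqrtr_sqr ltr_sqrt ?exprn_gt0 //.
exact: le_lt_trans hs hde.
Qed.

End Vec3.

Section Lip.
Context {dT : measure_display} {T : measurableType dT} {R : realType}.

Lemma GmeasP (G : set (set T)) (f : T -> R) : sub_sigma G ->
  Gmeas G f <-> measurable_fun [set: g_sigma_algebraType G] (f : g_sigma_algebraType G -> R).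
Proof.
move=> [sG _]; split.
- move=> Gf _ B mB; rewrite setTI measurable_g_measurableTypeE //; exact: Gf.
- move=> mf B mB; have := mf measurableT B mB.
  by rewrite setTI measurable_g_measurableTypeE.
Qed.

Lemma Gmeas_lip {d : nat} (G : set (set T)) (f : 'rV[R]_d -> R) (L : R) (xi : T -> 'rV[R]_d) :
  sub_sigma G -> 0 <= L -> (forall x y, `|f x - f y| <= L * enorm (x - y)) ->
  Gmeas_vec G xi -> Gmeas G (fun w => f (xi w)).
Proof.
move=> sG L0 Lip Gxi; apply/GmeasP => //.
have mxi i : measurable_fun [set: g_sigma_algebraType G] (fun w => xi w 0 i).
  exact: (GmeasP G (fun w => xi w 0 i) sG).1 (Gxi i).
set h := fun k (w : g_sigma_algebraType G) => f (qseq k) + L * enorm (xi w - qseq k).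
have mh k : measurable_fun setT (h k).
  apply: measurable_realfun.measurable_funD; first exact: measurable_cst.
  apply: measurable_realfun.measurable_funM; first exact: measurable_cst.
  rewrite /enorm.
  have md : measurable_fun [set: g_sigma_algebraType G]
      (fun w : g_sigma_algebraType G => dotp (xi w - qseq k) (xi w - qseq k)).
    rewrite /dotp; apply: measurable_sum => i /=.
    under eq_fun do rewrite !mxE.
    by apply: measurable_realfun.measurable_funM;
      apply: measurable_realfun.measurable_funB => //; exact: measurable_cst.
  exact: (measurableT_comp (measurable_realfun.continuous_measurable_fun (@sqrt_continuous R)) md).
apply: (measurability _ (measurable_realfun.RGenInftyO.measurableE R)) => //.
move=> _ [_ [c ->] <-].
have -> : [set: g_sigma_algebraType G] `&` (fun w => f (xi w)) @^-1` `]-oo, c[ =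
    \bigcup_k ([set: g_sigma_algebraType G] `&` h k @^-1` `]-oo, c[).
  apply/seteqP; split => w /=.
  - rewrite /preimage /= in_itv /= => -[_ fc].
    set eps := c - f (xi w).
    have eps0 : 0 < eps by rewrite subr_gt0.
    have [k hk] := qseq_dense (xi w) (eps / (2 * L + 1)) ltac:(rewrite divr_gt0 //; lra).
    exists k => //; split => //; rewrite /preimage /= in_itv /= /h.
    have := Lip (qseq k) (xi w); rewrite enormB => hl.
    have : L * enorm (xi w - qseq k) <= L * (eps / (2 * L + 1)).
      by rewrite ler_wpM2l // ltW.
    set kk := eps / (2 * L + 1) in hk *.
    have k0 : 0 < kk by rewrite divr_gt0 //; lra.
    have hkk : kk * (2 * L + 1) = eps by rewrite /kk divfK // gt_eqF //; lra.
    have e2 : kk * (2 * L + 1) = 2 * (L * kk) + kk by ring.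
    move: hl; rewrite ler_norml => /andP[_ hl].
    move: hkk e2 hl; set m1 := L * kk; set m2 := L * enorm _; set m3 := kk * _.
    move=> hkk e2 hl hm; rewrite /eps in hkk; lra.
  - move=> [k _ /= [_]]; rewrite /preimage /= !in_itv /= /h => hk; split => //.
    have := Lip (xi w) (qseq k); rewrite ler_norml => /andP[_ hl].
    move: hl hk; set m2 := L * enorm _; move=> hl hk; lra.
apply: bigcup_measurable => k _.
exact: (mh k) measurableT _ (measurable_itv _).
Qed.

End Lip.

Section Meas2.
Context {dT : measure_display} {T : measurableType dT} {R : realType}.
Variable P : probability T R.
Local Notation int S f := (P.-integrable S (EFin \o f)).

Lemma RIE S (mS : measurable S) (f : T -> R) : int S f ->
  (\int[P]_(w in S) f w)%:E = (\int[P]_(w in S) (f w)%:E)%E.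
Proof. by move=> i; rewrite /Rintegral fineK // integrable_fin_num. Qed.

Lemma int_sum_seq {S} (mS : measurable S) (I : Type) (h : I -> T -> R) (s : seq I) :
  (forall j, int S (h j)) ->
  int S (fun w => \sum_(j <- s) h j w) /\
  \int[P]_(w in S) (\sum_(j <- s) h j w) = \sum_(j <- s) \int[P]_(w in S) h j w.
Proof.
move=> hi; elim: s => [|j s [iJ eJ]].
  split.
    apply: (eq_integrable _ (cst 0%E)) => //; last exact: integrable0.
    by move=> w _; rewrite /= big_nil.
  rewrite big_nil (@eq_Rintegral _ _ _ _ _ (fun _ => 0)); last by move=> w _; rewrite big_nil.
  by rewrite Rintegral_cst // mul0r.
have E : (fun w => \sum_(i <- j :: s) h i w) = (fun w => h j w + \sum_(i <- s) h i w).
  by apply/funext => w; rewrite big_cons.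
rewrite E big_cons /=; split.
  apply: (eq_integrable _ ((EFin \o h j) \+ (EFin \o (fun w => \sum_(i <- s) h i w)))) => //.
  exact: integrableD.
by rewrite RintegralD // eJ.
Qed.

Lemma fineP_le S A : measurable S -> measurable A -> S `<=` A ->
  fine (P S) <= fine (P A).
Proof.
move=> mS mA SA; rewrite fine_le ?fin_num_measure //.
by apply: le_measure => //; rewrite inE.
Qed.

Lemma RI_sub_le S A (f : T -> R) : measurable S -> measurable A -> S `<=` A ->
  int A f -> (forall w, A w -> 0 <= f w) ->
  \int[P]_(w in S) f w <= \int[P]_(w in A) f w.
Proof.
move=> mS mA SA iA f0.
have iS : int S f := integrableS mA mS SA iA.
rewrite -lee_fin !RIE //.
apply: ge0_subset_integral => //; first exact: measurable_int iA.
Qed.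

Lemma RI_ae_le S (Y : T -> R) (c : R) : measurable S -> int setT Y -> 0 <= c ->
  {ae P, forall w, Y w <= c} -> \int[P]_(w in S) Y w <= c * fine (P S).
Proof.
move=> mS iY c0 [N [mN PN sub]].
have iS : int S Y := integrableS measurableT mS (subsetT _) iY.
rewrite -lee_fin RIE // EFinM fineK ?fin_num_measure //.
rewrite (negligible_integral mN mS iS PN).
have mSN : measurable (S `\` N) by exact: measurableD.
apply: (@le_trans _ _ (\int[P]_(w in S `\` N) (cst c%:E) w)%E).
  apply: le_integral => //.
  - exact: integrableS mS mSN (@subDsetl _ _ _) iS.
  - exact: finite_measure_integrable_cst.
  move=> w /set_mem [Sw Nw]; rewrite lee_fin /=.
  by apply: contra_notT Nw => /negP h; apply: sub.
rewrite integral_cst //; apply: lee_wpmul2l; first by rewrite lee_fin.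
by apply: le_measure => //; rewrite inE.
Qed.


Lemma int_add {S} (mS : measurable S) (f1 f2 : T -> R) :
  int S f1 -> int S f2 -> int S (fun w => f1 w + f2 w).
Proof.
move=> i1 i2; have := integrableD mS i1 i2.
by apply: eq_integrable => // w _ /=; rewrite EFinD.
Qed.

Lemma int_cst {S} (mS : measurable S) (k : R) : int S (fun _ => k).
Proof. exact: finite_measure_integrable_cst. Qed.

End Meas2.

Theorem propositionB1 (dT : measure_display) (T : measurableType dT)
  (R : realType) (P : probability T R) (d : nat)
  (F : 'rV[R]_d -> 'rV[R]_d) (L mu lambda sigma gamma : R)
  (xstar : 'rV[R]_d)
  (Ft Gh : set (set T))
  (X : T -> 'rV[R]_d) (U0 U1 : T -> 'rV[R]_d -> 'rV[R]_d) :
  0 < L ->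
  (forall x y, enorm (F x - F y) <= L * enorm (x - y)) ->
  F xstar = 0 ->
  0 <= lambda -> 0 < mu ->
  (forall x, dotp (F x) (x - xstar) >= mu * enorm (x - xstar) ^+ 2 - lambda) ->
  sub_sigma Ft -> sub_sigma Gh -> Ft `<=` Gh ->
  Gmeas_vec Ft X ->
  let Xh := fun w => X w - gamma *: (F (X w) + U0 w (X w)) in
  let Z := fun w => F (Xh w) + U1 w (Xh w) in
  Gmeas_vec Gh Xh ->
  (* stochastic oracle at step t (conditioning on F_t) *)
  (forall xi : T -> 'rV[R]_d, Gmeas_vec Ft xi ->
     is_cond_exp_vec P Ft (fun w => U0 w (xi w)) (fun _ => 0) /\
     exists Y, is_cond_exp P Ft (fun w => enorm (U0 w (xi w)) ^+ 2) Y /\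
               {ae P, forall w, Y w <= sigma ^+ 2}) ->
  (* stochastic oracle at step t+1/2 *)
  (forall xi : T -> 'rV[R]_d, Gmeas_vec Gh xi ->
     is_cond_exp_vec P Gh (fun w => U1 w (xi w)) (fun _ => 0) /\
     exists Y, is_cond_exp P Gh (fun w => enorm (U1 w (xi w)) ^+ 2) Y /\
               {ae P, forall w, Y w <= sigma ^+ 2}) ->
  0 < gamma -> gamma <= 1 / (Num.sqrt 3 * L) ->
  forall Y1 Y2 : T -> R,
    is_cond_exp P Ft (fun w => enorm (Z w) ^+ 2) Y1 ->
    is_cond_exp P Ft (fun w => dotp (Z w) (X w - xstar)) Y2 ->
    {ae P, forall w,
       gamma ^+ 2 * Y1 w <=
       2 * gamma * Y2 w + 2 * (lambda * gamma + 3 * sigma ^+ 2 * gamma ^+ 2)}.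
Proof.
move=> L0 Lip Fxs lam0 mu0 mono sFt sGh FtGh GX Xh Z GXh orc0 orc1 g0 gle Y1 Y2 hY1 hY2.
set g := gamma.
have [hU0 [Y0 [hY0 aeY0]]] := orc0 X GX.
have [hU1 [Y1' [hY1' aeY1']]] := orc1 Xh GXh.
set W := fun w => g ^+ 2 * enorm (Z w) ^+ 2 - 2 * g * dotp (Z w) (X w - xstar).
set V := fun w => (2 * g ^+ 2) *: F (Xh w) - (2 * g) *: (X w - xstar).
set N0 := fun w => enorm (U0 w (X w)) ^+ 2.
set N1 := fun w => enorm (U1 w (Xh w)) ^+ 2.
have pw : forall w, W w <= 2 * g * lambda + 2 * g ^+ 2 * N0 w + g ^+ 2 * N1 w
    + dotp (U1 w (Xh w)) (V w).
  move=> w.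
  have := @pointwise R d F L mu lambda g xstar (X w) (U0 w (X w)) (U1 w (Xh w))
    L0 Lip mu0 mono g0 gle (Xh w) erefl.
  by rewrite /W /N0 /N1 /V /Z.
have GtoH : forall f : T -> R, Gmeas Ft f -> Gmeas Gh f.
  by move=> f h B mB; apply: FtGh; exact: h.
have GV : forall i, Gmeas Gh (fun w => V w 0 i).
  move=> i; apply/(GmeasP _ _ sGh).
  have hF : Gmeas Gh (fun w => F (Xh w) 0 i).
    apply: (@Gmeas_lip _ _ _ _ Gh (fun x => F x 0 i) L) => //; first exact: ltW.
    move=> x y; have := coord_le_enorm (F x - F y) i; rewrite !mxE => h.
    exact: le_trans h (Lip x y).
  have mF := (GmeasP _ _ sGh).1 hF.
  have mX := (GmeasP _ _ sGh).1 (GtoH _ (GX i)).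
  have -> : (fun w => V w 0 i) =
      fun w => 2 * g ^+ 2 * F (Xh w) 0 i - 2 * g * (X w 0 i - xstar 0 i).
    by apply/funext => w; rewrite /V !mxE.
  apply: measurable_realfun.measurable_funB.
    by apply: measurable_realfun.measurable_funM => //; exact: measurable_cst.
  apply: measurable_realfun.measurable_funM; first exact: measurable_cst.
  by apply: measurable_realfun.measurable_funB => //; exact: measurable_cst.
set Vs := fun w => \sum_(i < d) `|V w 0 i|.
have GVs : Gmeas Gh Vs.
  apply/(GmeasP _ _ sGh); apply: measurable_sum => i.
  exact: (measurableT_comp (@measurable_realfun.normr_measurable R setT) ((GmeasP _ _ sGh).1 (GV i))).
set B := fun n : nat => Vs @^-1` `]-oo, n%:R].
have GB : forall n, Gh (B n) by move=> n; apply: GVs; exact: measurable_itv.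
have VB : forall n w i, B n w -> `|V w 0 i| <= n%:R.
  move=> n w i; rewrite /B /preimage /= in_itv /= => h.
  apply: le_trans h; rewrite /Vs (bigD1 i) //= lerDl.
  by apply: sumr_ge0 => j _.
case: hY1 => iZ2 iY1 GY1 eY1.
case: hY2 => iZD iY2 GY2 eY2.
case: hY0 => iN0 iY0 GY0 eY0.
case: hY1' => iN1 iY1' GY1' eY1'.
have mFt : forall A, Ft A -> measurable A by move=> A /sFt.2.
have mGh : forall A, Gh A -> measurable A by move=> A /sGh.2.
have iW : P.-integrable setT (EFin \o W).
  have := integrableB measurableT (int_scale P measurableT _ (g ^+ 2) iZ2)
    (int_scale P measurableT _ (2 * g) iZD).
  by apply: eq_integrable => // w _ /=; rewrite EFinB.
have u0 : forall i A, Gh A -> \int[P]_(w in A) (U1 w (Xh w) 0 i) = 0.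
  move=> i A GA; have [_ _ _ e] := hU1 i.
  rewrite /Rintegral -(e A GA) (eq_integral (fun _ => 0%E)).
    by rewrite integral0.
  by move=> w _; rewrite mxE.
have iU1 : forall i, P.-integrable setT (EFin \o (fun w => U1 w (Xh w) 0 i)).
  by move=> i; have [? _ _ _] := hU1 i.
set K := 2 * g * lambda + 3 * g ^+ 2 * sigma ^+ 2.
have s0 : 0 <= sigma ^+ 2 := sqr_ge0 _.
have bndn : forall A, Ft A -> forall n,
    \int[P]_(w in A `&` B n) W w <= K * fine (P A).
  move=> A FA n.
  have GA : Gh A := FtGh _ FA.
  have mA := mFt _ FA.
  set S := A `&` B n.
  have GS : Gh S := GI Gh sGh _ _ GA (GB n).
  have mS := mGh _ GS.
  have SA : S `<=` A by apply: subIsetl.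
  have iWS : P.-integrable S (EFin \o W) := integrableS measurableT mS (subsetT _) iW.
  have ih : forall i : 'I_d, P.-integrable S
      (EFin \o (fun w => U1 w (Xh w) 0 i * V w 0 i)).
    move=> i; apply: (int_mulr P mS _ _ n%:R).
    - exact: integrableS measurableT mS (subsetT _) (iU1 i).
    - exact: measurable_funS measurableT (subsetT _) (Gmeas_mfun sGh _ (GV i)).
    - by move=> w [_ Bw]; exact: VB.
  have [idt edt] := int_sum_seq P mS 'I_d (fun i w => U1 w (Xh w) 0 i * V w 0 i)
    (index_enum 'I_d) ih.
  have edt0 : \int[P]_(w in S) dotp (U1 w (Xh w)) (V w) = 0.
    rewrite /dotp edt big1 // => i _.
    apply: (@pullout _ _ _ P Gh _ _ S n%:R sGh (iU1 i) (u0 i) (GV i) GS).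
    by move=> w [_ Bw]; exact: VB.
  have iN0S : P.-integrable S (EFin \o N0) := integrableS measurableT mS (subsetT _) iN0.
  have iN1S : P.-integrable S (EFin \o N1) := integrableS measurableT mS (subsetT _) iN1.
  have i1 := int_scale P mS _ (2 * g ^+ 2) iN0S.
  have i2 := int_scale P mS _ (g ^+ 2) iN1S.
  have i0 := int_cst P mS (2 * g * lambda).
  have i01 := int_add P mS _ _ i0 i1.
  have i012 := int_add P mS _ _ i01 i2.
  have iall := int_add P mS _ _ i012 idt.
  have := le_Rintegral mS iWS iall (fun w _ => pw w).
  rewrite RintegralD // RintegralD // RintegralD // Rintegral_cst // !RintegralZl //.
  rewrite edt0 addr0.
  have hN0 : \int[P]_(w in S) N0 w <= sigma ^+ 2 * fine (P A).
    apply: le_trans (RI_sub_le P S A N0 mS mA SA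
      (integrableS measurableT mA (subsetT _) iN0) (fun w _ => sqr_ge0 _)) _.
    have -> : \int[P]_(w in A) N0 w = \int[P]_(w in A) Y0 w by rewrite /Rintegral eY0.
    exact: RI_ae_le P A Y0 (sigma ^+ 2) mA iY0 s0 aeY0.
  have hN1 : \int[P]_(w in S) N1 w <= sigma ^+ 2 * fine (P A).
    have -> : \int[P]_(w in S) N1 w = \int[P]_(w in S) Y1' w by rewrite /Rintegral eY1'.
    apply: le_trans (RI_ae_le P S Y1' (sigma ^+ 2) mS iY1' s0 aeY1') _.
    by rewrite ler_wpM2l // fineP_le.
  have hPS : fine (P S) <= fine (P A) by rewrite fineP_le.
  have PS0 : 0 <= fine (P S) by rewrite fine_ge0 // measure_ge0.
  have gl0 : 0 <= 2 * g * lambda by rewrite !mulr_ge0 // ltW.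
  have g20 : 0 <= g ^+ 2 := sqr_ge0 _.
  have t1 : 2 * g * lambda * fine (P S) <= 2 * g * lambda * fine (P A) by rewrite ler_wpM2l.
  have t2 : 2 * g ^+ 2 * \int[P]_(w in S) N0 w <= 2 * g ^+ 2 * (sigma ^+ 2 * fine (P A)).
    by rewrite ler_wpM2l // mulr_ge0.
  have t3 : g ^+ 2 * \int[P]_(w in S) N1 w <= g ^+ 2 * (sigma ^+ 2 * fine (P A)).
    by rewrite ler_wpM2l.
  have e : K * fine (P A) = 2 * g * lambda * fine (P A) + 2 * g ^+ 2 * (sigma ^+ 2 * fine (P A))
     + g ^+ 2 * (sigma ^+ 2 * fine (P A)) by rewrite /K; ring.
  rewrite e; move: t1 t2 t3.
  set a1 := 2 * g * lambda * fine (P S); set a2 := 2 * g ^+ 2 * \int[P]_(w in S) N0 w.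
  set a3 := g ^+ 2 * \int[P]_(w in S) N1 w.
  set b1 := 2 * g * lambda * fine (P A); set b2 := 2 * g ^+ 2 * _; set b3 := g ^+ 2 * _.
  move=> t1 t2 t3 h; lra.
have mW : measurable_fun setT W.
  exact/measurable_realfun.measurable_EFinP/(measurable_int P iW).
have bndA : forall A, Ft A -> \int[P]_(w in A) W w <= K * fine (P A).
  move=> A FA.
  have mA := mFt _ FA.
  have mB : forall n, measurable (B n) by move=> n; exact: mGh.
  set fn := fun (n : nat) (w : T) => ((W w * \1_(B n) w)%:E : \bar R).
  have mfn : forall n, measurable_fun A (fn n : T -> \bar R).
    move=> n; apply/measurable_realfun.measurable_EFinP.
    apply: measurable_realfun.measurable_funM.
      exact: measurable_funS measurableT (subsetT _) mW.
    exact: measurable_realfun.measurable_indic.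
  have mf : measurable_fun A (EFin \o W).
    exact/measurable_realfun.measurable_EFinP/(measurable_funS measurableT (subsetT _) mW).
  have cv : {ae P, forall w, A w -> fn ^~ w @ \oo --> (EFin \o W) w}.
    apply: aeW => w Aw; apply: cvg_near_cst.
    near=> n.
    rewrite /fn /indic mem_set ?mulr1 //.
    rewrite /B /preimage /= in_itv /=.
    near: n; exists (Num.trunc (Vs w)).+1 => // n /= hn.
    have Vs0 : 0 <= Vs w by apply: sumr_ge0 => i _.
    apply: ltW; rewrite -truncn_lt_nat //.
  have ig : P.-integrable A (EFin \o (fun w => `|W w|)).
    exact: integrableS measurableT mA (subsetT _) (int_abs P measurableT _ iW).
  set gW := EFin \o (fun w => `|W w|).
  have dom : {ae P, forall w n, A w -> (`|fn n w| <= gW w)%E}.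
    apply: aeW => w n Aw; rewrite /fn /= lee_fin normrM.
    rewrite -[X in _ <= X]mulr1 ler_wpM2l //.
    by rewrite /indic; case: (_ \in _); rewrite ?normr0 ?normr1.
  have [_ _ hc] := dominated_convergence mA mfn mf cv ig dom.
  have iWA : P.-integrable A (EFin \o W) := integrableS measurableT mA (subsetT _) iW.
  have eqn : forall n, (\int[P]_(w in A) fn n w)%E = (\int[P]_(w in A `&` B n) W w)%:E.
    move=> n; have mAB : measurable (A `&` B n) := measurableI _ _ mA (mB n).
    rewrite (RIE P (A `&` B n) mAB W (integrableS measurableT mAB (subsetT _) iW)).
    rewrite integral_mkcondr; apply: eq_integral => w _.
    by rewrite /fn /patch /indic; case: (w \in B n) => /=; rewrite ?mulr1 ?mulr0.
  rewrite -lee_fin (RIE P A mA W iWA) -(cvg_lim (@ereal_hausdorff R) hc).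
  apply: lime_le; first by apply/cvg_ex; eexists; exact: hc.
  by apply: nearW => n; rewrite /= eqn lee_fin; exact: bndn.
set C := 2 * (lambda * g + 3 * sigma ^+ 2 * g ^+ 2).
set Dw := fun w => g ^+ 2 * Y1 w - 2 * g * Y2 w - C.
have mY1 := (GmeasP _ _ sFt).1 GY1.
have mY2 := (GmeasP _ _ sFt).1 GY2.
have GD : Gmeas Ft Dw.
  apply/(GmeasP _ _ sFt).
  apply: measurable_funB; last exact: measurable_cst.
  apply: measurable_funB.
    by apply: measurable_funM => //; exact: measurable_cst.
  by apply: measurable_funM => //; exact: measurable_cst.
set A := Dw @^-1` `]0, +oo[.
have FA : Ft A by apply: GD; exact: measurable_itv.
have mA := mFt _ FA.
have iY1A := integrableS measurableT mA (subsetT _) iY1.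
have iY2A := integrableS measurableT mA (subsetT _) iY2.
have iZ2A := integrableS measurableT mA (subsetT _) iZ2.
have iZDA := integrableS measurableT mA (subsetT _) iZD.
have hint : \int[P]_(w in A) Dw w <= 0.
  have i1 := int_scale P mA _ (g ^+ 2) iY1A.
  have i2 := int_scale P mA _ (2 * g) iY2A.
  have i12 : P.-integrable A (EFin \o (fun w => g ^+ 2 * Y1 w - 2 * g * Y2 w)).
    have := integrableB mA i1 i2.
    by apply: eq_integrable => // w _ /=; rewrite EFinB.
  rewrite /Dw RintegralB //; last exact: int_cst.
  rewrite RintegralB // Rintegral_cst // !RintegralZl //.
  have -> : \int[P]_(w in A) Y1 w = \int[P]_(w in A) enorm (Z w) ^+ 2 by rewrite /Rintegral eY1.
  have -> : \int[P]_(w in A) Y2 w = \int[P]_(w in A) dotp (Z w) (X w - xstar) by rewrite /Rintegral eY2.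
  have := bndA A FA.
  rewrite /W RintegralB //; try by apply: int_scale.
  rewrite !RintegralZl //.
  have PA0 : 0 <= fine (P A) by rewrite fine_ge0 // measure_ge0.
  have eC : C = K + 3 * (sigma ^+ 2 * g ^+ 2) by rewrite /C /K; ring.
  have q0 : 0 <= 3 * (sigma ^+ 2 * g ^+ 2) * fine (P A).
    by apply: mulr_ge0 => //; apply: mulr_ge0 => //; apply: mulr_ge0; exact: sqr_ge0.
  rewrite eC [(K + _) * _]mulrDl; move: q0; set q := 3 * _ * _; set k := K * _.
  set a1 := g ^+ 2 * Rintegral _ _ _; set a2 := 2 * g * Rintegral _ _ _.
  move=> q0 h; lra.
have mDT : measurable_fun A (EFin \o Dw).
  apply/measurable_EFinP.
  exact: measurable_funS measurableT (subsetT _) (Gmeas_mfun sFt _ GD).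
have iDA : P.-integrable A (EFin \o Dw).
  have i1 := int_scale P mA _ (g ^+ 2) iY1A.
  have i2 := int_scale P mA _ (2 * g) iY2A.
  have := integrableB mA (integrableB mA i1 i2) (int_cst P mA C).
  by apply: eq_integrable => // w _ /=; rewrite !EFinB.
have habs : (\int[P]_(w in A) `|(EFin \o Dw) w|)%E = 0.
  have -> : (\int[P]_(w in A) `|(EFin \o Dw) w|)%E = (\int[P]_(w in A) (EFin \o Dw) w)%E.
    apply: eq_integral => w /set_mem; rewrite /A /preimage /= in_itv /= andbT => hw.
    by rewrite gtr0_norm.
  apply/eqP; rewrite eq_le; apply/andP; split.
    by rewrite -(RIE P A mA Dw iDA) lee_fin.
  apply: integral_ge0 => w; rewrite /A /preimage /= in_itv /= andbT => hw.
  by rewrite lee_fin ltW.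
have hae := (ae_eq_integral_abs P mA mDT).1 habs.
apply: filterS hae => w h.
case: (ltrP 0 (Dw w)) => hD.
  have Aw : A w by rewrite /A /preimage /= in_itv /= andbT.
  by move: (h Aw) => /= [] hD0; rewrite hD0 ltxx in hD.
by move: hD; rewrite /Dw; lra.
Unshelve. all: by end_near.
Qed.
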